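(* Let $n=p_1^{m_1}\cdots p_k^{m_k}$ with $m_i>1$ for at least one $i$. Then the adjacency spectrum (as a multiset) of $\mathcal E_{\mathbb Z_n}(\mathscr U)$ consists of the eigenvalue $0$ with multiplicity $T-m-(2^k-2)$ together with the $2^k-2$ eigenvalues of the symmetric matrix $C_A(\mathscr G)$ indexed by $V(\mathscr G)$, with entries $(C_A)_{II}=0$, $(C_A)_{IJ}=\sqrt{n_In_J}$ if $I\sim J$ in $\mathscr G$, and $(C_A)_{IJ}=0$ otherwise.
   Context: Primes $p_1<\dots<p_k$, positive integers $m_i$. Nonzero proper ideals of $\mathbb Z_n$ are uniquely $\langle p_1^{r_1}\cdots p_k^{r_k}\rangle$, $0\le r_i\le m_i$, $(r_i)\ne(0,\dots,0),(m_1,\dots,m_k)$; essential iff $r_j\ne m_j$ for all $j$. Essential ideal graph $\mathcal E_{\mathbb Z_n}$: vertices nonzero proper ideals, distinct $I,K$ adjacent iff $I+K$ essential. $T=\prod_i(m_i+1)-2$ is the number of vertices, $m=\prod_i m_i-1$ the number of essential nonzero proper ideals. $\mathscr U$ = nonzero proper nonessential ideals, $\mathcal E_{\mathbb Z_n}(\mathscr U)$ the induced subgraph. For $I\in\mathscr U$, $\Xi_I=\{i:r_i=m_i\}$; $[I]=\{J\in\mathscr U:\Xi_J=\Xi_I\}$. $\mathscr G$: vertex set the $2^k-2$ ideals $\langle\prod_{i\in S}p_i^{m_i}\rangle$, $S$ nonempty proper subset of $\{1,\dots,k\}$, $I\sim J$ iff $\Xi_I\cap\Xi_J=\emptyset$.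 For $I\in V(\mathscr G)$, $n_I=|[I]|=\prod_{i\notin\Xi_I}m_i$. *)

(* Defs.v *)
From HB Require Import structures.
From mathcomp Require Import all_boot all_order all_algebra.
Set Implicit Arguments. Unset Strict Implicit. Unset Printing Implicit Defensive.
Import Order.TTheory GRing.Theory Num.Theory.

(* Model of the ideals of Z_n (n > 0):
   every ideal of Z_n is <d> = { x in Z_n | d %| x } for a unique divisor d of n;
   <d> is the zero ideal iff d = n, and the whole ring iff d = 1.
   So the nonzero proper ideals are the divisors d of n with 1 < d < n. *)

Definition idealZ (n d : nat) : {set 'I_n} := [set x : 'I_n | d %| x].

Definition essentialb (n d : nat) : bool :=
  [forall e : 'I_n, ((e %| n) && (0 < e)) ==>
     [exists x : 'I_n, [&& 0 < (x : nat), x \in idealZ n d & x \in idealZ n e]]].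

Definition idealsZ (n : nat) : seq nat := [seq d <- divisors n | 1 < d < n].

Definition Uset (n : nat) : seq nat := [seq d <- idealsZ n | ~~ essentialb n d].

(* adjacency matrix of the induced subgraph E_{Z_n}(U):
   I ~ K iff I <> K and I + K = <gcd d e> is essential *)
Definition adjU (R : nzRingType) (n : nat) : 'M[R]_(size (Uset n)) :=
  \matrix_(i, j) (if (i != j) && essentialb n (gcdn (nth 0 (Uset n) i) (nth 0 (Uset n) j))
                  then 1 else 0)%R.

Definition kp (n : nat) : nat := size (primes n).
Definition pr (n i : nat) : nat := nth 0 (primes n) i.
Definition ex (n i : nat) : nat := logn (pr n i) n.

Definition Tn (n : nat) : nat := (\prod_(i < kp n) (ex n i).+1 - 2)%N.
Definition mn (n : nat) : nat := (\prod_(i < kp n) ex n i - 1)%N.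

Definition Xi (n d : nat) : seq nat :=
  [seq i <- iota 0 (kp n) | logn (pr n i) d == ex n i].

Definition nI (n d : nat) : nat := size [seq e <- Uset n | Xi n e == Xi n d].

Definition VG (n : nat) : seq nat :=
  [seq (\prod_(i < kp n | i \in A) pr n i ^ ex n i)%N
  | A : {set 'I_(kp n)} <- enum [set A : {set 'I_(kp n)} | (A != set0) && (A != setT)]].

Definition CA (R : rcfType) (n : nat) : 'M[R]_(size (VG n)) :=
  \matrix_(i, j)
    (if (i != j) && ~~ has (fun a => a \in Xi n (nth 0%N (VG n) j)) (Xi n (nth 0%N (VG n) i))
     then Num.sqrt ((nI n (nth 0%N (VG n) i) * nI n (nth 0%N (VG n) j))%N%:R) else 0)%R.

(* Main.v *)
Require Import Defs.
From HB Require Import structures.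
From mathcomp Require Import all_boot all_order all_algebra.
From mathcomp Require Import zify.
Import Order.TTheory GRing.Theory Num.Theory.

Section Sy.
Local Open Scope ring_scope.
Lemma sylv (S : comNzRingType) (N K : nat) (M : 'M[S]_(N, K)) (B : 'M[S]_(K, N)) (x : S) :
  x ^+ K * \det (x%:M - M *m B) = x ^+ N * \det (x%:M - B *m M).
Proof.
set Q := block_mx (x%:M : 'M_N) M B (1%:M : 'M_K).
have e1 : block_mx (1%:M : 'M_N) (- M) 0 (x%:M : 'M_K) *m Q =
          block_mx (x%:M - M *m B) 0 (x *: B) (x%:M : 'M_K).
  rewrite mulmx_block !mul1mx !mul0mx !add0r !mulNmx mulmx1.
  by rewrite mulmx1 subrr mul_scalar_mx.
have e2 : block_mx (1%:M : 'M_N) 0 (- B) (x%:M : 'M_K) *m Q =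
          block_mx (x%:M : 'M_N) M 0 (x%:M - B *m M).
  rewrite mulmx_block !mul1mx !mul0mx !addr0 !mulNmx mulmx1 mul_scalar_mx mul_mx_scalar addNr.
  by rewrite addrC.
have := congr1 determinant e1; have := congr1 determinant e2.
rewrite !det_mulmx !det_ublock !det_lblock !det_scalar => <- ->; by rewrite mulrC.
Qed.

Lemma char_sylv (R : comNzRingType) (N K : nat) (M : 'M[R]_(N, K)) (B : 'M[R]_(K, N)) :
  'X ^+ K * char_poly (M *m B) = 'X ^+ N * char_poly (B *m M).
Proof. by rewrite /char_poly /char_poly_mx !map_mxM; apply: sylv. Qed.
End Sy.


Lemma card_nth (T : Type) (x0 : T) (s : seq T) (P : pred T) :
  #|[pred a : 'I_(size s) | P (nth x0 s a)]| = count P s.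
Proof.
rewrite cardE -deprecated_filter_index_enum size_filter.
have -> : index_enum 'I_(size s) = enum 'I_(size s).
  by rewrite -deprecated_filter_index_enum filter_predT.
rewrite -[in RHS](mkseq_nth x0 s) /mkseq count_map -val_enum_ord count_map.
by apply: eq_count.
Qed.


Lemma card_ordlt B c : c <= B -> #|[pred x : 'I_B | x < c]| = c.
Proof.
elim: c => [_|c IH hc]; first by apply: eq_card0 => x; rewrite inE.
rewrite (cardD1 (Ordinal hc)) inE /= ltnSn add1n; congr _.+1; rewrite -[RHS](IH (ltnW hc)).
apply: eq_card => x; rewrite !inE -val_eqE /= ltnS.
by rewrite ltn_neqAle.
Qed.
Lemma prod_image (k : nat) (g : 'I_k -> nat) : foldr muln 1 [seq g x | x : 'I_k] = \prod_(i < k) g i.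
Proof. by rewrite foldrE big_map big_enum. Qed.

Section NT.
Variable n : nat.
Hypothesis hn : 0 < n.
Local Notation k := (kp n).

Lemma pr_mem {i : nat} : i < k -> pr n i \in primes n.
Proof. by move=> hi; apply: mem_nth. Qed.

Lemma pr_prime {i : nat} : i < k -> prime (pr n i).
Proof. by move=> /pr_mem; rewrite mem_primes => /andP[]. Qed.

Lemma pr_inj {i j : nat} : i < k -> j < k -> pr n i = pr n j -> i = j.
Proof. by move=> hi hj; apply/(uniqP 0 (primes_uniq n)). Qed.

Lemma ex_gt0 {i : nat} : i < k -> 0 < ex n i.
Proof. by move=> /pr_mem hi; rewrite /ex logn_gt0. Qed.

Lemma pr_index {q} : q \in primes n -> exists2 j, j < k & q = pr n j.
Proof. by move=> hq; exists (index q (primes n)); rewrite /kp /pr ?index_mem ?nth_index. Qed.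

Lemma logn_prod (I : finType) (P : pred I) (F : I -> nat) q :
  (forall i, 0 < F i) -> logn q (\prod_(i | P i) F i) = \sum_(i | P i) logn q (F i).
Proof.
move=> hF.
suff : 0 < \prod_(i | P i) F i /\ logn q (\prod_(i | P i) F i) = \sum_(i | P i) logn q (F i) by case.
elim/big_rec2: _ => [|i y x _ [h1 e1]]; first by rewrite logn1.
by rewrite muln_gt0 h1 hF lognM // e1.
Qed.

Definition Pe (e : 'I_k -> nat) : nat := \prod_(i < k) pr n i ^ e i.

Lemma Pe_gt0 e : 0 < Pe e.
Proof. by rewrite prodn_gt0 // => i; rewrite expn_gt0 prime_gt0 // pr_prime. Qed.

Lemma lognPe e (j : 'I_k) : logn (pr n j) (Pe e) = e j.
Proof.
rewrite /Pe logn_prod; last by move=> i; rewrite expn_gt0 prime_gt0 // pr_prime.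
rewrite (bigD1 j) //= big1 ?addn0.
  by rewrite lognX logn_prime ?pr_prime // eqxx muln1.
move=> i hij; rewrite lognX logn_prime ?pr_prime //.
case: eqP => [h|]; last by rewrite muln0.
by have := @pr_inj j i (ltn_ord j) (ltn_ord i) h => /val_inj h'; rewrite h' eqxx in hij.
Qed.

Lemma lognPe0 e q : q \notin primes n -> logn q (Pe e) = 0.
Proof.
move=> hq; rewrite /Pe logn_prod; last by move=> i; rewrite expn_gt0 prime_gt0 // pr_prime.
apply: big1 => i _; rewrite lognX logn_prime ?pr_prime //.
case: eqP => [e1|]; last by rewrite muln0.
by move: hq; rewrite e1 pr_mem.
Qed.

Lemma logn_notprimes d q : d %| n -> q \notin primes n -> logn q d = 0.
Proof.
move=> hd hq; apply/eqP; rewrite -leqn0.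
have : logn q n = 0 by apply/eqP; rewrite -leqn0 leqNgt logn_gt0.
by move=> <-; apply: dvdn_leq_log.
Qed.

Lemma dvd_logP d m : 0 < d -> 0 < m ->
  (forall q, q \in primes d -> logn q d <= logn q m) -> d %| m.
Proof.
move=> hd hm H; apply/dvdn_partP => // p hp.
have pp : prime p by move: hp; rewrite mem_primes => /andP[].
by rewrite p_part pfactor_dvdn // H.
Qed.

Lemma Pe_dvd (e : 'I_k -> nat) : (forall i, e i <= ex n i) -> Pe e %| n.
Proof.
move=> H; apply: dvd_logP => //; first exact: Pe_gt0.
move=> q _; case: (boolP (q \in primes n)) => hq.
  by case: (pr_index hq) => j hj ->; rewrite (lognPe e (Ordinal hj)); apply: H.
by rewrite lognPe0.
Qed.

Lemma PeK d : d %| n -> d = Pe (fun i => logn (pr n i) d).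
Proof.
move=> hd; apply: eqn_from_log; first exact: dvdn_gt0 hd.
  exact: Pe_gt0.
move=> q; case: (boolP (q \in primes n)) => hq.
  by case: (pr_index hq) => j hj ->; rewrite (lognPe _ (Ordinal hj)).
by rewrite lognPe0 // logn_notprimes.
Qed.

Lemma logn_le_ex d (i : nat) : d %| n -> logn (pr n i) d <= ex n i.
Proof. by move=> hd; apply: dvdn_leq_log. Qed.

Lemma essE d : d %| n ->
  essentialb n d = [forall j : 'I_k, logn (pr n j) d != ex n j].
Proof.
move=> hd; have dpos : 0 < d by exact: dvdn_gt0 hd.
apply/idP/idP.
- move=> hE; apply/forallP => j; apply/negP => /eqP hj.
  have pj := pr_prime (ltn_ord j).
  have pjn : pr n j %| n by move: (pr_mem (ltn_ord j)); rewrite mem_primes => /and3P[].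
  set e := n %/ pr n j.
  have epos : 0 < e by rewrite divn_gt0 ?prime_gt0 // dvdn_leq.
  have elt : e < n by rewrite ltn_Pdiv ?prime_gt1.
  have edv : e %| n by rewrite dvdn_div.
  move/forallP: hE => /(_ (Ordinal elt)) /=; rewrite edv epos /= => /existsP[x].
  rewrite !inE => /and3P[x0 dx ex1].
  have : n %| x.
    apply: dvd_logP => // q _.
    case: (eqVneq q (pr n j)) => [->|qne].
      by rewrite -/(ex n j) -hj; apply: dvdn_leq_log.
    have -> : logn q n = logn q e.
      rewrite /e logn_div // (logn_prime q pj); move: qne; case: eqP => //= _ _; by rewrite subn0.
    exact: dvdn_leq_log.
  by move/dvdn_leq => /(_ x0); rewrite leqNgt ltn_ord.
- move=> /forallP hF; apply/forallP => e; apply/implyP => /andP[edv epos].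
  have xlt : lcmn d e < n.
    rewrite ltn_neqAle dvdn_leq ?dvdn_lcm ?hd ?edv // andbT.
    have : ~~ (n %| e) by apply/negP => /(dvdn_leq epos); rewrite leqNgt ltn_ord.
    apply: contra => /eqP hx.
    apply: dvd_logP => // q hq.
    have hqn := hq.
    case: (pr_index hqn) => j hj qe.
    have := hF (Ordinal hj); rewrite /= -qe.
    have : logn q n = maxn (logn q d) (logn q e) by rewrite -logn_lcm // hx.
    have le1 : logn q d <= logn q n by apply: dvdn_leq_log.
    rewrite /ex -qe => hm; rewrite hm.
    by case: (leqP (logn q d) (logn q e)) => h; rewrite ?eqxx.
  apply/existsP; exists (Ordinal xlt); rewrite !inE /= lcmn_gt0 dpos epos /=.
  by rewrite dvdn_lcml dvdn_lcmr.
Qed.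


Lemma forall_iota (P : nat -> bool) : [forall j : 'I_k, P j] = all P (iota 0 k).
Proof.
apply/forallP/allP => [H i|H j].
  by rewrite mem_iota add0n => /andP[_ hi]; exact: (H (Ordinal hi)).
by apply: H; rewrite mem_iota add0n ltn_ord.
Qed.

Lemma XiE d i : (i \in Xi n d) = (i < k) && (logn (pr n i) d == ex n i).
Proof. by rewrite /Xi mem_filter mem_iota add0n andbC. Qed.

Lemma has_filterI (T : Type) (a b : pred T) s :
  has a (filter b s) = has (fun x => a x && b x) s.
Proof. by elim: s => //= x s IH; case: (b x); rewrite /= IH ?andbT ?andbF. Qed.

Lemma Xi_nil d : d %| n -> essentialb n d = (Xi n d == [::]).
Proof.
move=> hd; rewrite essE // (forall_iota (fun i => logn (pr n i) d != ex n i)) /Xi.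
rewrite -[_ == [::]]negbK -has_filter -all_predC.
by apply: eq_all => i.
Qed.

Lemma min_eq a b c : a <= c -> b <= c -> (minn a b == c) = (a == c) && (b == c).
Proof.
move=> ha hb; apply/eqP/andP => [h|[/eqP h1 /eqP h2]]; first (split; apply/eqP; lia).
lia.
Qed.

Lemma Xi_gcd d e : d %| n -> e %| n ->
  essentialb n (gcdn d e) = ~~ has (fun a => a \in Xi n e) (Xi n d).
Proof.
move=> hd he; rewrite essE; last exact: dvdn_trans (dvdn_gcdl d e) hd.
rewrite (forall_iota (fun i => logn (pr n i) (gcdn d e) != ex n i)) /Xi has_filterI -all_predC.
apply: eq_in_all => i; rewrite mem_iota add0n => /andP[_ hi] /=.
rewrite logn_gcd ?(dvdn_gt0 hn hd) ?(dvdn_gt0 hn he) //.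
rewrite min_eq ?logn_le_ex // mem_filter mem_iota add0n hi andbT.
by rewrite /= andbT andbC.
Qed.

Lemma memUset d : (d \in Uset n) = [&& d %| n, 1 < d < n & ~~ essentialb n d].
Proof.
rewrite /Uset /idealsZ !mem_filter -dvdn_divisors //.
by case: (d %| n); case: (1 < d < n); case: (essentialb n d).
Qed.

Definition gA (A : {set 'I_k}) : nat := \prod_(i < k | i \in A) pr n i ^ ex n i.

Lemma gA_Pe (A : {set 'I_k}) : gA A = Pe (fun i => if i \in A then ex n i else 0).
Proof. by rewrite /gA /Pe big_mkcond; apply: eq_bigr => i _; case: ifP. Qed.

Lemma logn_gA (A : {set 'I_k}) (j : 'I_k) : logn (pr n j) (gA A) = if j \in A then ex n j else 0.
Proof. by rewrite gA_Pe lognPe. Qed.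

Lemma memXigA (A : {set 'I_k}) (j : 'I_k) : (val j \in Xi n (gA A)) = (j \in A).
Proof.
rewrite XiE ltn_ord /= (logn_gA A j); case: ifP => _; rewrite ?eqxx //.
by rewrite eq_sym; apply/negbTE; rewrite -lt0n ex_gt0.
Qed.

Lemma Xi_eq d (A : {set 'I_k}) : (forall j : 'I_k, (logn (pr n j) d == ex n j) = (j \in A)) ->
  Xi n d = Xi n (gA A).
Proof.
move=> H; apply: eq_in_filter => i; rewrite mem_iota add0n => /andP[_ hi].
have := memXigA A (Ordinal hi); rewrite XiE hi /= => ->.
exact: (H (Ordinal hi)).
Qed.

Lemma Xi_gA_inj (A B : {set 'I_k}) : Xi n (gA A) = Xi n (gA B) -> A = B.
Proof. by move=> H; apply/setP => j; rewrite -!memXigA H. Qed.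

Lemma gA_Uset (A : {set 'I_k}) : A != set0 -> A != setT -> gA A \in Uset n.
Proof.
move=> h0 hT; have hd : gA A %| n.
  by rewrite gA_Pe; apply: Pe_dvd => i; case: ifP.
have [j hj] : exists j, j \in A by apply/set0Pn.
have [j' hj'] : exists j', j' \notin A.
  move: hT; rewrite eqEsubset subsetT /= => /subsetPn[x _ hx]; by exists x.
have hne : gA A != n.
  apply/eqP => e; have := logn_gA A j'; rewrite (negbTE hj') e -/(ex n j').
  have := @ex_gt0 j' (ltn_ord j'); lia.
have hpos : 0 < gA A by rewrite gA_Pe Pe_gt0.
rewrite memUset hd /= -andbA; apply/and3P; split.
- rewrite ltn_neqAle hpos andbT; apply/eqP => e.
  have := logn_gA A j; rewrite hj -e logn1; have := @ex_gt0 j (ltn_ord j); lia.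
- by rewrite ltn_neqAle hne dvdn_leq.
- rewrite essE //; apply/forallPn; exists j; rewrite negbK (logn_gA A j) hj //.
Qed.

Definition FT := {ffun 'I_k -> 'I_n.+1}.
Definition gf (f : FT) : nat := Pe (fun i => f i).
Definition Fle := family (fun i : 'I_k => [pred x : 'I_n.+1 | x <= ex n i]).

Lemma ex_lt (i : nat) : ex n i < n.+1.
Proof. by apply: (leq_trans (ltn_logl _ hn)). Qed.

Lemma gf_inj : injective gf.
Proof.
move=> f f' H; apply/ffunP => i; apply/val_inj.
by have := lognPe (fun i => f i) i; rewrite /gf in H; rewrite H lognPe.
Qed.

Lemma count_div (Q : pred nat) :
  count Q (divisors n) = #|[pred f : FT | (f \in Fle) && Q (gf f)]|.
Proof.
rewrite -size_filter -(size_image gf); apply: perm_size.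
apply: uniq_perm; first by rewrite filter_uniq ?divisors_uniq.
  by rewrite map_inj_uniq ?enum_uniq //; exact: gf_inj.
move=> x; rewrite mem_filter -dvdn_divisors //; apply/andP/imageP.
- move=> [hQ hx].
  have hf : gf ([ffun i : 'I_k => inord (logn (pr n i) x)] : FT) = x.
    rewrite [in RHS](PeK x hx) /gf /Pe; apply: eq_bigr => i _.
    rewrite ffunE inordK //.
    exact: leq_ltn_trans (logn_le_ex x i hx) (ex_lt i).
  exists ([ffun i : 'I_k => inord (logn (pr n i) x)] : FT); last by rewrite hf.
  rewrite inE hf hQ andbT.
  apply/familyP => i; rewrite inE ffunE inordK; first exact: logn_le_ex.
  exact: leq_ltn_trans (logn_le_ex x i hx) (ex_lt i).
- move=> [f]; rewrite inE => /andP[hf hQ] ->; split => //.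
  apply: Pe_dvd => i; have := familyP hf i; by rewrite inE.
Qed.

Lemma card_Fle : #|[pred f : FT | (f \in Fle) && true]| = \prod_(i < k) (ex n i).+1.
Proof.
rewrite (eq_card (B := Fle)); last by move=> f; rewrite !inE andbT.
rewrite card_family prod_image; apply: eq_bigr => i _.
rewrite -(@card_ordlt _ _ (ex_lt i)); apply: eq_card => x; by rewrite !inE.
Qed.

Lemma card_Fess : #|[pred f : FT | (f \in Fle) && essentialb n (gf f)]| = \prod_(i < k) ex n i.
Proof.
rewrite (eq_card (B := family (fun i : 'I_k => [pred x : 'I_n.+1 | x < ex n i]))).
  rewrite card_family prod_image; apply: eq_bigr => i _.
  by rewrite -{2}(@card_ordlt _ _ (ltnW (ex_lt i))).
move=> f; rewrite !inE; apply/andP/familyP.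
- move=> [/familyP hf]; rewrite essE; last first.
    by apply: Pe_dvd => i; have := hf i; rewrite inE.
  move/forallP => hE i; rewrite inE ltn_neqAle.
  have := hf i; rewrite inE => ->; rewrite andbT.
  by have := hE i; rewrite /gf lognPe.
- move=> hf; have hd : gf f %| n.
    by apply: Pe_dvd => i; have := hf i; rewrite inE; apply: ltnW.
  split; first by apply/familyP => i; have := hf i; rewrite !inE; apply: ltnW.
  rewrite essE //; apply/forallP => i; rewrite /gf lognPe.
  by have := hf i; rewrite inE ltn_neqAle => /andP[].
Qed.

Lemma ess1 : essentialb n 1.
Proof.
rewrite essE ?dvd1n //; apply/forallP => i; rewrite logn1 eq_sym -lt0n.
exact: ex_gt0.
Qed.

Lemma sizeU : 0 < k -> size (Uset n) = (Tn n - mn n)%N.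
Proof.
move=> hk.
have nness : ~~ essentialb n n.
  rewrite essE // negb_forall; apply/existsP; exists (Ordinal hk); by rewrite negbK.
have h1 : size (Uset n) = count (fun d => ~~ essentialb n d && (d != n)) (divisors n).
  rewrite /Uset /idealsZ size_filter count_filter; apply: eq_in_count => d.
  rewrite -dvdn_divisors // => hd /=.
  have dpos := dvdn_gt0 hn hd.
  have dle := dvdn_leq hn hd.
  case: (eqVneq d n) => [->|dn]; first by rewrite ltnn !andbF.
  case: (eqVneq d 1) => [->|d1]; first by rewrite ess1.
  have -> : d < n by rewrite ltn_neqAle dn dle.
  have -> : 1 < d by rewrite ltn_neqAle eq_sym d1 dpos.
  by rewrite andbT.
have h2 : count (fun d => ~~ essentialb n d) (divisors n) =
    count (fun d => ~~ essentialb n d && (d != n)) (divisors n) + 1.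
  rewrite -size_filter -(count_predC (fun d => d != n)) !count_filter.
  congr (_ + _); first by apply: eq_count => d; rewrite /= andbC.
  rewrite (eq_count (a2 := pred1 n)); last first.
    by move=> d; rewrite /= negbK; case: eqP => // ->; rewrite nness.
  by rewrite count_uniq_mem ?divisors_uniq // divisors_id.
have h3 := count_predC (essentialb n) (divisors n).
have h4 : size (divisors n) = \prod_(i < k) (ex n i).+1.
  by rewrite -count_predT count_div card_Fle.
have h5 := count_div (essentialb n); rewrite card_Fess in h5.
have h6 : 0 < \prod_(i < k) ex n i by rewrite prodn_gt0 // => i; exact: ex_gt0.
rewrite /Tn /mn h1 -/k.
have e7 : count (predC (essentialb n)) (divisors n) = count (fun d => ~~ essentialb n d) (divisors n) by [].
lia.
Qed.

Definition SS := [set A : {set 'I_k} | (A != set0) && (A != setT)].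

Lemma VGE : VG n = map gA (enum SS).
Proof. by []. Qed.

Lemma sizeVG : 0 < k -> size (VG n) = (2 ^ k - 2)%N.
Proof.
move=> hk; rewrite VGE size_map -cardE.
have hT : #|{set 'I_k}| = 2 ^ k.
  by rewrite -cardsT -powersetT card_powerset cardsT card_ord.
have h0T : (set0 : {set 'I_k}) != setT.
  apply/eqP => /setP /(_ (Ordinal hk)); by rewrite !inE.
have eS : SS = [set: {set 'I_k}] :\ set0 :\ setT.
  by apply/setP => A; rewrite !inE andbT andbC.
rewrite eS; have := cardsD1 setT ([set: {set 'I_k}] :\ set0).
have := cardsD1 (set0 : {set 'I_k}) [set: {set 'I_k}].
rewrite cardsT hT !inE eq_sym h0T /==> -> ->; by rewrite !add1n subn2.
Qed.

End NT.

Section Main.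
Variable R : rcfType.
Variable n : nat.
Hypothesis hn : 0 < n.
Hypothesis hk : 0 < kp n.
Local Notation k := (kp n).
Local Notation N := (size (Uset n)).
Local Notation K := (size (VG n)).
Let u (a : 'I_N) := nth 0 (Uset n) a.
Let w (v : 'I_K) := nth 0 (VG n) v.

Lemma uU a : u a \in Uset n.
Proof. exact: mem_nth. Qed.

Lemma u_dvd a : u a %| n.
Proof. by have := uU a; rewrite memUset // => /andP[]. Qed.

Lemma u_ness a : ~~ essentialb n (u a).
Proof. by have := uU a; rewrite memUset // => /and3P[_ _]. Qed.

Lemma u_lt a : u a < n.
Proof. by have := uU a; rewrite memUset // => /and3P[_ /andP[_ ->]]. Qed.

Lemma Xiu_ne a : Xi n (u a) != [::].
Proof. by rewrite -Xi_nil ?u_dvd ?u_ness. Qed.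

Lemma K_eq : K = size (enum (SS n)).
Proof. by rewrite VGE size_map. Qed.

Lemma wE v : w v = gA n (nth set0 (enum (SS n)) v).
Proof.
rewrite /w; have hi := ltn_ord v; move: (nat_of_ord v) hi => i.
by rewrite VGE size_map => hi; rewrite (nth_map set0).
Qed.

Lemma wS (v : 'I_K) : nth set0 (enum (SS n)) v \in SS n.
Proof.
have hv : v < size (enum (SS n)) by rewrite -K_eq.
by have := mem_nth set0 hv; rewrite mem_enum.
Qed.

Lemma w_inj v v' : Xi n (w v) = Xi n (w v') -> v = v'.
Proof.
rewrite !wE => /Xi_gA_inj /eqP; rewrite nth_uniq ?enum_uniq -?K_eq //.
by move/eqP/val_inj.
Qed.

Lemma w_in_U v : w v \in Uset n.
Proof.
rewrite wE; have := wS v; rewrite inE => /andP[h0 hT].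
exact: gA_Uset.
Qed.

Lemma ex_phi a : exists v : 'I_K, Xi n (u a) = Xi n (w v).
Proof.
pose A := [set j : 'I_k | logn (pr n j) (u a) == ex n j].
have hA : A \in SS n.
  rewrite inE; apply/andP; split.
    have := u_ness a; rewrite essE ?u_dvd // negb_forall => /existsP[j].
    rewrite negbK => hj; apply/set0Pn; exists j; by rewrite inE.
  apply/eqP => hAT; have := u_lt a; suff -> : u a = n by rewrite ltnn.
  rewrite (@PeK n hn _ (u_dvd a)) [in RHS](@PeK n hn _ (dvdnn n)) /Pe.
  apply: eq_bigr => i _; apply/eqP.
  have : i \in A by rewrite hAT inE.
  by rewrite inE => /eqP ->.
have hv : index A (enum (SS n)) < K by rewrite K_eq index_mem mem_enum.
exists (Ordinal hv); rewrite wE /= nth_index ?mem_enum //.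
by apply: Xi_eq => j; rewrite inE.
Qed.

Local Open Scope ring_scope.

Lemma main_sec :
  char_poly (adjU R n) =
  'X ^+ (Tn n - mn n - (2 ^ kp n - 2))%N * char_poly (CA R n).
Proof.
have [phi hphi] := fin_all_exists ex_phi.
pose M : 'M[R]_(N, K) := \matrix_(a, v) (if phi a == v then 1 else 0).
pose C0 : 'M[R]_K := \matrix_(i, j)
  (if (i != j) && ~~ has (fun x => x \in Xi n (w j)) (Xi n (w i)) then 1 else 0).
pose D : 'M[R]_K := diag_mx (\row_v (nI n (w v))%:R).
pose S : 'M[R]_K := diag_mx (\row_v Num.sqrt (nI n (w v))%:R).
have mulM p (X : 'M[R]_(K, p)) a j : (M *m X) a j = X (phi a) j.
  rewrite !mxE (bigD1 (phi a)) //= mxE eqxx mul1r big1 ?addr0 // => v hv.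
  by rewrite mxE eq_sym (negbTE hv) mul0r.
have mulMT p (X : 'M[R]_(p, K)) i b : (X *m M^T) i b = X i (phi b).
  rewrite !mxE (bigD1 (phi b)) //= !mxE eqxx mulr1 big1 ?addr0 // => v hv.
  by rewrite !mxE eq_sym (negbTE hv) mulr0.
have F1 : adjU R n = M *m C0 *m M^T.
  apply/matrixP => a b; rewrite mulMT mulM !mxE.
  rewrite (@Xi_gcd n hn _ _ (u_dvd a) (u_dvd b)) -/(u a) -/(u b) -(hphi a) -(hphi b).
  congr (if _ then _ else _).
  case H : (has _ _); rewrite ?andbF //= !andbT.
  have hne : Xi n (u a) != Xi n (u b).
    apply/eqP => e; move: H; rewrite -e; have := Xiu_ne a.
    by case: (Xi n (u a)) => //= x s _; rewrite mem_head.
  apply/idP/idP => _.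
    by apply/eqP => e; rewrite (hphi a) (hphi b) e eqxx in hne.
  by apply/eqP => e; rewrite e eqxx in hne.
have hcount v : #|[pred a : 'I_N | phi a == v]| = nI n (w v).
  rewrite /nI size_filter -(@card_nth _ 0%N); apply: eq_card => a; rewrite !inE.
  apply/eqP/eqP => [<-|e]; first by rewrite -/(u a) hphi.
  by apply: w_inj; rewrite -(hphi a).
have F2 : M^T *m M = D.
  apply/matrixP => v v'; rewrite !mxE.
  rewrite (eq_bigr (fun a => if phi a == v then ((v == v')%:R : R) else 0)); last first.
    move=> a _; rewrite !mxE; case: eqP => [->|_]; rewrite ?mul0r ?mul1r //.
    by case: eqP.
  rewrite -big_mkcond /= sumr_const.
  have -> : #|[pred a : 'I_N | phi a == v]| = #|(fun a => phi a == v)| by [].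
  rewrite hcount.
  by case: eqP => [->|_]; rewrite ?mul0rn ?mulr0n // mulr1n.
have F3 : CA R n = S *m C0 *m S.
  apply/matrixP => i j; rewrite mul_mx_diag mul_diag_mx !mxE -/(w i) -/(w j).
  case: ifP => _; rewrite ?mulr1 ?mulr0 ?mul0r //.
  by rewrite natrM sqrtrM ?ler0n.
have F4 : S *m S = D.
  rewrite mulmx_diag; congr diag_mx; apply/rowP => v; rewrite !mxE.
  by rewrite -expr2 sqr_sqrtr ?ler0n.
have KN : (K <= N)%N.
  have hi v : (index (w v) (Uset n) < N)%N by rewrite index_mem w_in_U.
  have inj : injective (fun v : 'I_K => Ordinal (hi v)).
    move=> v v' /(congr1 val) /= e; apply: w_inj.
    by rewrite -(nth_index 0 (w_in_U v)) e nth_index ?w_in_U.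
  by have := leq_card _ inj; rewrite !card_ord.
have e1 := @char_sylv _ _ _ M (C0 *m M^T).
rewrite -[(C0 *m M^T) *m M]mulmxA F2 [M *m (C0 *m M^T)]mulmxA -F1 in e1.
have e2 := @char_sylv _ _ _ S (C0 *m S).
rewrite -[(C0 *m S) *m S]mulmxA F4 [S *m (C0 *m S)]mulmxA -F3 in e2.
have XK : ('X ^+ K : {poly R}) != 0 by rewrite expf_neq0 ?polyX_eq0.
have e3 : char_poly (CA R n) = char_poly (C0 *m D) by apply: (mulfI XK).
rewrite -sizeU // -sizeVG //; apply: (mulfI XK).
by rewrite e1 mulrA -exprD subnKC // e3.
Qed.

End Main.

Local Open Scope ring_scope.

Theorem mainTheorem8 (R : rcfType) (n : nat) (hn : (0 < n)%N)
    (hm : exists2 i, (i < kp n)%N & (1 < ex n i)%N) :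
  char_poly (adjU R n) =
  'X ^+ (Tn n - mn n - (2 ^ kp n - 2))%N * char_poly (CA R n).
Proof.
apply: main_sec => //.
by case: hm => i hi _; apply: leq_ltn_trans hi.
Qed.
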